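(* Let $H$ be a numerical semigroup, $k$ a field, $R=k[H]$ Gorenstein, $a=\mathrm{a}(R)$, and let $\mathcal{X}_R$ be the set of graded ideals $I$ of $R$ with $R/I$ Gorenstein and $\mu_R(I)\ge 2$. For $I\in\mathcal{X}_R$ set $J=t^{a-\mathrm{a}(R/I)}I\subseteq k[t,t^{-1}]$. Then: (1) $J\in\mathcal{X}_R$ and $\mathrm{a}(R/J)=2a-\mathrm{a}(R/I)$; hence if $\mathrm{a}(R/I)<a$ (resp. $>a$) then $\mathrm{a}(R/J)>a$ (resp. $<a$); (2) $\mathrm{a}(R/I)\in H$, $a\ne\mathrm{a}(R/I)$, and $a-\mathrm{a}(R/I)\in\mathbb{Z}\setminus H$; (3) if $\mathrm{a}(R/I)<a$ then $a-\mathrm{a}(R/I)\in\mathbb{N}\setminus H$; (4) if $\mathrm{a}(R/I)>a$ then $\mathrm{a}(R/I)-a\in\mathbb{N}\setminus H$.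
   Context: $R=k[H]=k[t^h\mid h\in H]\subseteq k[t]$ graded by $\deg t=1$; $\mathrm{a}(R)=\mathrm{c}(H)-1=\max(\mathbb{Z}\setminus H)$ where $\mathrm{c}(H)$ is the conductor of $H$; for an Artinian graded quotient $R/I$, $\mathrm{a}(R/I)$ is the largest $n$ with $[R/I]_n\ne 0$. $R$ Gorenstein is equivalent to $H$ symmetric. $\mu_R(I)$ is the minimal number of generators. *)

(* Defs.v *)
From HB Require Import structures.
From mathcomp Require Import all_boot all_order all_algebra.
Set Implicit Arguments. Unset Strict Implicit. Unset Printing Implicit Defensive.
Import Order.TTheory GRing.Theory Num.Theory.
Local Open Scope ring_scope.

Definition numerical_semigroup (H : pred nat) : Prop :=
  [/\ H 0%N, (forall m n, H m -> H n -> H (m + n)%N)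
    & exists N, forall n, (N <= n)%N -> H n].

Definition inHz (H : pred nat) (z : int) : bool := (0 <= z) && H (absz z).

(* a = a(R) = c(H) - 1 = max (Z \ H) *)
Definition a_inv_R (H : pred nat) (a : int) : Prop :=
  ~~ inHz H a /\ forall z : int, a < z -> inHz H z.

(* H symmetric (<=> R = k[H] Gorenstein), with a = max (Z \ H) *)
Definition symmetric_sg (H : pred nat) (a : int) : Prop :=
  forall z : int, inHz H z = ~~ inHz H (a - z).

(* R = k[H] = { f in k[t] | supp f included in H } *)
Definition inR (K : fieldType) (H : pred nat) (f : {poly K}) : Prop :=
  forall n, f`_n != 0 -> H n.

(* graded ideal of R (deg t = 1), as a subset of R *)
Definition graded_ideal (K : fieldType) (H : pred nat) (I : {poly K} -> Prop) : Prop :=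
  [/\ forall f, I f -> inR H f,
      I 0,
      forall f g, I f -> I g -> I (f + g),
      forall r f, inR H r -> I f -> I (r * f)
    & forall f n, I f -> I (f`_n *: 'X^n)].

Definition generated_by (K : fieldType) (H : pred nat) (I : {poly K} -> Prop)
  (gs : seq {poly K}) : Prop :=
  forall f, I f <-> exists rs : 'I_(size gs) -> {poly K},
      (forall i, inR H (rs i)) /\ f = \sum_(i < size gs) rs i * gs`_i.

Definition mu_ge (K : fieldType) (H : pred nat) (I : {poly K} -> Prop) (n : nat) : Prop :=
  forall gs, generated_by H I gs -> (n <= size gs)%N.

(* [R/I]_n <> 0 *)
Definition quot_deg_nonzero (K : fieldType) (H : pred nat) (I : {poly K} -> Prop)
  (n : nat) : Prop :=
  exists f : {poly K}, [/\ inR H f, f = f`_n *: 'X^n & ~ I f].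

(* b = a(R/I) : the largest n with [R/I]_n <> 0 *)
Definition a_quot (K : fieldType) (H : pred nat) (I : {poly K} -> Prop) (b : int) : Prop :=
  [/\ 0 <= b, quot_deg_nonzero H I (absz b)
    & forall n, quot_deg_nonzero H I n -> n%:Z <= b].

(* R/I Artinian: [R/I]_n = 0 for all large n *)
Definition artinian_quot (K : fieldType) (H : pred nat) (I : {poly K} -> Prop) : Prop :=
  exists N, forall n, (N <= n)%N -> H n -> I ('X^n).

Definition in_max_ideal (K : fieldType) (H : pred nat) (f : {poly K}) : Prop :=
  inR H f /\ f`_0 = 0.

(* f in R represents an element of the socle (0 :_{R/I} m) *)
Definition socle (K : fieldType) (H : pred nat) (I : {poly K} -> Prop) (f : {poly K}) : Prop :=
  inR H f /\ forall g, in_max_ideal H g -> I (g * f).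

(* R/I is (Artinian) Gorenstein: Artinian (graded, local) with
   dim_k Soc(R/I) = 1 *)
Definition gorenstein_quot (K : fieldType) (H : pred nat) (I : {poly K} -> Prop) : Prop :=
  artinian_quot H I /\
  exists f, [/\ socle H I f, ~ I f
              & forall g, socle H I g -> exists c : K, I (g - c *: f)].

Definition in_XR (K : fieldType) (H : pred nat) (I : {poly K} -> Prop) : Prop :=
  [/\ graded_ideal H I, gorenstein_quot H I & mu_ge H I 2].

Definition dpos (d : int) : nat := if 0 <= d then absz d else 0%N.
Definition dneg (d : int) : nat := if d < 0 then absz d else 0%N.

(* t^d I intersected with k[t]:  g with t^(d^-) g = t^(d^+) f, f in I *)
Definition shift_ideal (K : fieldType) (I : {poly K} -> Prop) (d : int) : {poly K} -> Prop :=
  fun g => exists f, I f /\ 'X^(dneg d) * g = 'X^(dpos d) * f.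

(* Main.v *)
Require Import Defs.
From HB Require Import structures.
From mathcomp Require Import all_boot all_order all_algebra zify.
From Stdlib Require Classical.
Import Order.TTheory GRing.Theory Num.Theory.
Local Open Scope ring_scope.
Set Implicit Arguments. Unset Strict Implicit. Unset Printing Implicit Defensive.

Section Aux.
Variable K : fieldType.

Lemma mulP (p q : {poly K}) k : (p*q)`_k != 0 ->
  exists j, [/\ (j <= k)%N, p`_j != 0 & q`_(k-j) != 0].
Proof.
rewrite coefM => nz.
case: (boolP [exists j : 'I_k.+1, (p`_j != 0) && (q`_(k-j) != 0)]).
  by move=> /existsP [j /andP [H1 H2]]; exists j; split => //; rewrite -ltnS.
move=> /existsPn Hn; move: nz; rewrite big1 ?eqxx // => j _.
have := Hn j; rewrite negb_and !negbK => /orP [/eqP -> | /eqP ->].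
  by rewrite mul0r. by rewrite mulr0.
Qed.

Lemma Xn_factor (p : {poly K}) e : (forall i, (i < e)%N -> p`_i = 0) ->
  p = 'X^e * drop_poly e p.
Proof.
move=> h; apply/polyP => i; rewrite coefXnM coef_drop_poly.
by case: ltnP => [/h //|le]; rewrite subnK.
Qed.

Lemma ord_decomp (p : {poly K}) : p != 0 ->
  exists e q, p = 'X^e * q /\ q`_0 != 0.
Proof.
move=> nz.
have ex : exists i, p`_i != 0.
  by exists (size p).-1; rewrite -/(lead_coef p) lead_coef_eq0.
case: (ex_minnP ex) => e He Hmin.
exists e, (drop_poly e p); split; last by rewrite coef_drop_poly add0n.
apply: Xn_factor => i lt; apply/eqP; apply: contraTT lt => Hi.
by rewrite -leqNgt; apply: Hmin.
Qed.

Lemma coef_ord_mul (p1 q1 : {poly K}) i e :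
  p1`_0 != 0 -> q1`_0 != 0 ->
  (('X^i * p1) * ('X^e * q1))`_(i + e) != 0.
Proof.
move=> h1 h2.
have -> : ('X^i * p1) * ('X^e * q1) = 'X^(i+e) * (p1 * q1).
  by rewrite exprD mulrACA.
by rewrite coefXnM ltnn subnn coef0M mulf_neq0.
Qed.

End Aux.

Section Sg.
Variables (K : fieldType) (H : pred nat) (a : int).
Hypotheses (hsg : numerical_semigroup H) (ha : a_inv_R H a) (hsym : symmetric_sg H a).

Lemma H0 : H 0%N. Proof. by case: hsg. Qed.
Lemma HD m n : H m -> H n -> H (m + n)%N. Proof. by case: hsg => _ h _; apply: h. Qed.

Lemma inHz_nat (n : nat) : inHz H n%:Z = H n. Proof. by []. Qed.
Lemma inHz_ge0 z : inHz H z -> 0 <= z. Proof. by case/andP. Qed.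
Lemma inHzP z : inHz H z -> exists n, z = n%:Z /\ H n.
Proof. by case: z => n //= /andP [_ h]; exists n. Qed.
Lemma inHzD x y : inHz H x -> inHz H y -> inHz H (x + y).
Proof.
move=> /inHzP [m [-> hm]] /inHzP [n [-> hn]].
by rewrite -PoszD inHz_nat; apply: HD.
Qed.
Lemma inHz_gt z : a < z -> inHz H z. Proof. by case: ha => _; apply. Qed.
Lemma a_notin : ~~ inHz H a. Proof. by case: ha. Qed.
Lemma symE z : inHz H z = ~~ inHz H (a - z). Proof. exact: hsym. Qed.

Lemma inR_Xn n : H n -> inR H ('X^n : {poly K}).
Proof. by move=> hn i; rewrite coefXn; have [->//|ne] := eqVneq i n; rewrite eqxx. Qed.
Lemma inR_Xn_inv n : inR H ('X^n : {poly K}) -> H n.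
Proof. by move=> h; apply: h; rewrite coefXn eqxx oner_eq0. Qed.
Lemma inR_C (c : K) : inR H c%:P.
Proof. rewrite /inR => i; rewrite coefC; have [->|ne] := eqVneq i 0%N; [by rewrite H0| by rewrite eqxx]. Qed.
Lemma inR_M (p q : {poly K}) : inR H p -> inR H q -> inR H (p * q).
Proof.
move=> hp hq k /mulP [j [le h1 h2]].
by rewrite -(subnKC le); apply: HD; [apply: hp | apply: hq].
Qed.

Definition Mon (S : {poly K} -> Prop) (d : int) :=
  forall f, S f <-> (inR H f /\ forall n, f`_n != 0 -> inHz H (n%:Z + d)).

Lemma Mon_Xn S d n : Mon S d -> (S 'X^n <-> (H n /\ inHz H (n%:Z + d))).
Proof.
move=> hS; rewrite hS; split.
  move=> [hr hn]; split; first exact: inR_Xn_inv.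
  by apply: hn; rewrite coefXn eqxx oner_eq0.
move=> [hn hd]; split; first exact: inR_Xn.
by move=> i; rewrite coefXn; have [->//|ne] := eqVneq i n; rewrite eqxx.
Qed.

Lemma Mon_graded S d : Mon S d -> graded_ideal H S.
Proof.
move=> hS; split.
- by move=> f /hS [].
- by apply/hS; split => [i|i]; rewrite coef0 eqxx.
- move=> f g /hS [hf1 hf2] /hS [hg1 hg2]; apply/hS; split => i; rewrite coefD => nz;
  (have : (f`_i != 0) || (g`_i != 0) by apply: contraNT nz; rewrite negb_or !negbK => /andP [/eqP -> /eqP ->]; rewrite addr0);
  case/orP => h; by [apply: hf1 | apply: hg1 | apply: hf2 | apply: hg2].
- move=> r f hr /hS [hf1 hf2]; apply/hS; split; first exact: inR_M.
  move=> k /mulP [j [le h1 h2]].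
  have -> : k%:Z + d = j%:Z + ((k - j)%N%:Z + d) by lia.
  by apply: inHzD; [apply: hr | apply: hf2].
- move=> f n /hS [hf1 hf2]; apply/hS; split => i; rewrite coefZ coefXn;
  have [->|ne] := eqVneq i n; rewrite ?mulr1 ?mulr0 ?eqxx //; by [apply: hf1 | apply: hf2].
Qed.

End Sg.

Section Sg2.
Variables (K : fieldType) (H : pred nat) (a : int).
Hypotheses (hsg : numerical_semigroup H) (ha : a_inv_R H a) (hsym : symmetric_sg H a).

Lemma Mon_supp (S : {poly K} -> Prop) d (f g : {poly K}) : Mon H S d ->
  (forall i, (f`_i != 0) = (g`_i != 0)) -> S f -> S g.
Proof.
move=> hS e /hS [h1 h2]; apply/hS; split => i; rewrite -e; by [apply: h1|apply: h2].
Qed.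

Lemma inR_1 : inR H (1 : {poly K}).
Proof. by rewrite -polyC1; apply: inR_C. Qed.

Lemma Mon_aquot (S : {poly K} -> Prop) d : Mon H S d -> ~~ inHz H d -> a_quot H S (a - d).
Proof.
move=> hS hd.
have : inHz H (a - d) by rewrite (symE hsym) opprB addrC subrK.
move=> /inHzP [n0 [e0 hn0]].
split.
- by rewrite e0.
- rewrite e0 /=; exists 'X^n0; split.
  + exact: inR_Xn.
  + by rewrite coefXn eqxx scale1r.
  + move/(Mon_Xn _ hS) => [_]; have -> : n0%:Z + d = a by lia.
    by apply/negP; apply: a_notin ha.
- move=> m [f [hf ef hnS]].
  have fm : f`_m != 0.
    apply/negP => /eqP f0; apply: hnS; rewrite ef f0 scale0r.
    by case: (Mon_graded hsg hS).
  have hm : H m by apply: hf.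
  have hmd : ~~ inHz H (m%:Z + d).
    apply/negP => hmd; apply: hnS; apply/hS; split => // i; rewrite ef coefZ coefXn.
    by have [->//|ne] := eqVneq i m; rewrite mulr0 eqxx.
  move: hmd; rewrite (symE hsym) negbK => /inHz_ge0; lia.
Qed.

Lemma Mon_gor (S : {poly K} -> Prop) d : Mon H S d -> ~~ inHz H d -> gorenstein_quot H S.
Proof.
move=> hS hd.
have : inHz H (a - d) by rewrite (symE hsym) opprB addrC subrK.
move=> /inHzP [b0 [e0 hb0]].
split.
  case: hsg => _ _ [N0 hN0].
  exists (N0 + absz (a - d) + 1)%N => n le hn; apply/(Mon_Xn _ hS); split => //.
  apply: (inHz_gt ha); lia.
exists 'X^b0; split.
- split; first exact: inR_Xn.
  move=> g [hg g0]; apply/hS; split; first by apply: inR_M => //; apply: inR_Xn.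
  move=> k; rewrite coefMXn; case: ltnP => [_|le nz]; first by rewrite eqxx.
  have hj : H (k - b0)%N by apply: hg.
  have jnz : (k - b0)%N != 0%N by apply: contraNneq nz => ->; rewrite g0.
  apply: (inHz_gt ha); lia.
- move/(Mon_Xn _ hS) => [_]; have -> : b0%:Z + d = a by lia.
  by apply/negP; apply: a_notin ha.
- move=> g [hg hsoc]; exists g`_b0; apply/hS; split.
  + move=> i; rewrite coefB coefZ coefXn.
    have [->|ne] := eqVneq i b0; first by rewrite mulr1 subrr eqxx.
    by rewrite mulr0 subr0; apply: hg.
  + move=> i; rewrite coefB coefZ coefXn.
    have [->|ne] := eqVneq i b0; first by rewrite mulr1 subrr eqxx.
    rewrite mulr0 subr0 => nz; apply/negPn/negP => hid.
    move: hid; rewrite (symE hsym) negbK => /inHzP [j [ej hj]].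
    have jnz : j != 0%N by apply: contraNneq ne => j0; lia.
    have : S ('X^j * g).
      apply: hsoc; split; first exact: inR_Xn.
      by rewrite coefXn eq_sym (negPf jnz).
    move/hS => [_ /(_ b0)].
    rewrite coefXnM.
    have -> : (b0 < j)%N = false by apply/negbTE; rewrite -leqNgt; lia.
    have -> : (b0 - j)%N = i by lia.
    move=> /(_ nz); have -> : b0%:Z + d = a by lia.
    by apply/negP; apply: a_notin ha.
Qed.

Lemma Mon_mu (S : {poly K} -> Prop) d : Mon H S d -> ~~ inHz H d -> ~~ inHz H (- d) -> mu_ge H S 2.
Proof.
move=> hS hd hnd.
have [n0 [hn0 Sn0]] : exists n, H n /\ S 'X^n.
  case: hsg => _ _ [N0 hN0].
  exists (N0 + absz (a - d) + 1)%N; have hn : H (N0 + absz (a - d) + 1)%N by apply: hN0; lia.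
  split => //; apply/(Mon_Xn _ hS); split => //; apply: (inHz_gt ha); lia.
have Xn_nz : forall n, ('X^n : {poly K}) != 0.
  by move=> n; apply/eqP => e; have := coefXn K n n; rewrite e coef0 eqxx => /eqP; rewrite eq_sym oner_eq0.
move=> gs; case: gs => [|g [|g2 gs]] // hgen.
  have /hgen [rs [_ e]] := Sn0.
  by move: e; rewrite big_ord0 => e; move: (Xn_nz n0); rewrite e eqxx.
have Sg : S g.
  apply/hgen; exists (fun _ => 1); split => [i|]; first exact: inR_1.
  by rewrite big_ord1 mul1r.
have gen1 : forall f, S f -> exists r, inR H r /\ f = r * g.
  by move=> f /hgen [rs [hr e]]; exists (rs ord0); split => //; rewrite e big_ord1.
have gnz : g != 0.
  apply/eqP => g0; have [r [_ e]] := gen1 _ Sn0.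
  by move: (Xn_nz n0); rewrite e g0 mulr0 eqxx.
have [e [g1 [eg g10]]] := ord_decomp gnz.
have hge : g`_e != 0 by rewrite eg coefXnM ltnn subnn.
have := Sg; move/hS => [hgR /(_ e hge)] hed.
have e0 : e != 0%N.
  by apply: contraNneq hd => e0; move: hed; rewrite e0 add0r.
have ed : e%:Z + d != 0.
  apply: contraNneq hnd => h; have -> : - d = e%:Z by lia.
  exact: hgR.
have : inHz H (a + e%:Z) by apply: (inHz_gt ha); lia.
move=> /inHzP [m0 [em0 hm0]].
have Sm0 : S 'X^m0.
  apply/(Mon_Xn _ hS); split => //; apply: (inHz_gt ha).
  have := inHz_ge0 hed; lia.
have [r [hr er]] := gen1 _ Sm0.
have rnz : r != 0 by apply/eqP => r0; move: (Xn_nz m0); rewrite er r0 mul0r eqxx.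
have [i [r1 [eri r10]]] := ord_decomp rnz.
have := coef_ord_mul i e r10 g10; rewrite -eri -eg -er coefXn.
have [eim|] := eqVneq (i + e)%N m0; last by rewrite eqxx.
move=> _.
have : H i by apply: hr; rewrite eri coefXnM ltnn subnn.
have -> : i = absz a by lia.
move=> hi; have : inHz H a by rewrite /inHz hi andbT; lia.
by rewrite (negPf (a_notin ha)).
Qed.
End Sg2.

Section Char.
Variables (K : fieldType) (H : pred nat) (a : int).
Hypotheses (hsg : numerical_semigroup H) (ha : a_inv_R H a) (hsym : symmetric_sg H a).

Lemma gradedE (I : {poly K} -> Prop) f : graded_ideal H I ->
  I f <-> (inR H f /\ forall n, f`_n != 0 -> I 'X^n).
Proof.
case=> hR h0 hD hM hG; split.
  move=> hf; split; first exact: hR.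
  move=> n nz; have hc : inR H (f`_n)^-1%:P by apply: inR_C.
  have := hM (f`_n)^-1%:P _ hc (hG f n hf).
  by rewrite mul_polyC scalerA mulVf // scale1r.
move=> [hf hn]; rewrite -[f]coefK poly_def.
apply: (big_ind I) => // i _.
have [->|nz] := eqVneq f`_i 0; first by rewrite scale0r.
by rewrite -mul_polyC; apply: hM; [apply: inR_C | apply: hn].
Qed.

Lemma soc_Xn (I : {poly K} -> Prop) m : graded_ideal H I -> H m ->
  (forall k, (m < k)%N -> H k -> I 'X^k) -> socle H I 'X^m.
Proof.
move=> hgr hm hk; split; first exact: inR_Xn.
move=> g [hg g0]; apply/(gradedE _ hgr); split; first by apply: inR_M => //; apply: inR_Xn.
move=> k; rewrite coefMXn; case: ltnP => [_|le nz]; first by rewrite eqxx.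
have hj : H (k - m)%N by apply: hg.
have jnz : (k - m)%N != 0%N by apply: contraNneq nz => ->; rewrite g0.
apply: hk; first lia.
by rewrite -(subnKC le); apply: HD.
Qed.

Lemma aquot_facts (I : {poly K} -> Prop) b : graded_ideal H I -> a_quot H I b ->
  [/\ 0 <= b, H (absz b), ~ I 'X^(absz b)
    & forall m, H m -> ~ I 'X^m -> (m <= absz b)%N].
Proof.
move=> hgr [hb [f [hf ef hnf]] hmax]; have [hR h0 hD hM hG] := hgr.
have fb : f`_(absz b) != 0.
  by apply/negP => /eqP f0; apply: hnf; rewrite ef f0 scale0r.
split => //.
- exact: hf.
- move=> hX; apply: hnf; rewrite ef -mul_polyC; apply: hM => //; exact: inR_C.
- move=> m hm hnm.
  have : quot_deg_nonzero H I m.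
    by exists 'X^m; split; [apply: inR_Xn | rewrite coefXn eqxx scale1r | ].
  move/hmax; lia.
Qed.

Lemma charI (I : {poly K} -> Prop) b : graded_ideal H I -> gorenstein_quot H I ->
  a_quot H I b -> Mon H I (a - b).
Proof.
move=> hgr [_ [f0 [[_ hsoc0] hnf0 huniq]]] hab.
have [hb hbH hnb hbound] := aquot_facts hgr hab.
set b0 := absz b in hbH hnb hbound.
have eb : b = b0%:Z by rewrite /b0; lia.
have [hR h0 hD hM hG] := hgr.
have socb : forall m, socle H I 'X^m -> ~ I 'X^m -> m = b0.
  move=> m hsm hnm.
  have hsb : socle H I 'X^b0.
    apply: soc_Xn => // k lt hk; apply: Classical_Prop.NNPP => hnk.
    by have := hbound k hk hnk; lia.
  have [c hc] := huniq _ hsm; have [c' hc'] := huniq _ hsb.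
  move/(gradedE _ hgr): hc => [_ hc]; move/(gradedE _ hgr): hc' => [_ hc'].
  have cm : 1 - c * f0`_m = 0.
    apply/eqP/negPn/negP => nz; apply: hnm; apply: hc.
    by rewrite coefB coefZ coefXn eqxx.
  have cb : 1 - c' * f0`_b0 = 0.
    apply/eqP/negPn/negP => nz; apply: hnb; apply: hc'.
    by rewrite coefB coefZ coefXn eqxx.
  have c0 : c != 0.
    by apply/eqP => c0; move: cm; rewrite c0 mul0r subr0 => /eqP; rewrite oner_eq0.
  have f0b : f0`_b0 != 0.
    by apply/eqP => f0b; move: cb; rewrite f0b mulr0 subr0 => /eqP; rewrite oner_eq0.
  apply/eqP/negPn/negP => ne; apply: hnb; apply: hc.
  have ne' : b0 != m by rewrite eq_sym.
  by rewrite coefB coefZ coefXn (negPf ne') sub0r oppr_eq0 mulf_neq0.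
have below : forall k m, (b0 - m <= k)%N -> H m -> ~ I 'X^m -> H (b0 - m)%N /\ (m <= b0)%N.
  elim=> [|k IH] m lek hm hnm.
    have le := hbound m hm hnm.
    have : socle H I 'X^m.
      apply: soc_Xn => // k lt hk; apply: Classical_Prop.NNPP => hnk.
      by have := hbound k hk hnk; lia.
    move/socb => /(_ hnm) ->; by rewrite subnn H0.
  case: (Classical_Prop.classic (socle H I 'X^m)) => [hs|hns].
    by move: (socb _ hs hnm) => ->; rewrite subnn H0.
  have le := hbound m hm hnm.
  have [g hng] : exists g, ~ (in_max_ideal H g -> I (g * 'X^m)).
    apply: Classical_Pred_Type.not_all_ex_not => hall; apply: hns; split; first exact: inR_Xn.
    exact: hall.
  have [[hg g0] hnI] := Classical_Prop.imply_to_and _ _ hng.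
  have [j hj] : exists j, ~ ((g * 'X^m)`_j != 0 -> I 'X^j).
    apply: Classical_Pred_Type.not_all_ex_not => hall; apply: hnI; apply/(gradedE _ hgr).
    by split => //; apply: inR_M => //; apply: inR_Xn.
  have [nz hnj] := Classical_Prop.imply_to_and _ _ hj.
  move: nz; rewrite coefMXn; case: ltnP => [_|lej nz]; first by rewrite eqxx.
  have hjm : H (j - m)%N by apply: hg.
  have jnz : (j - m)%N != 0%N by apply: contraNneq nz => ->; rewrite g0.
  have hjH : H j by rewrite -(subnKC lej); apply: HD.
  have lej' := hbound j hjH hnj.
  have [IH1 _] := IH j ltac:(lia) hjH hnj.
  split => //.
  have -> : (b0 - m = (b0 - j) + (j - m))%N by lia.
  exact: HD.
have XnE : forall n, I 'X^n <-> (H n /\ inHz H (n%:Z + (a - b))).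
  move=> n; split.
    move=> hn; have hnH : H n by apply: inR_Xn_inv; apply: hR.
    split => //; apply/negPn/negP => hnd.
    move: hnd; rewrite (symE hsym) negbK => /inHzP [j [ej hj]].
    apply: hnb; have -> : b0 = (j + n)%N by lia.
    by rewrite exprD; apply: hM => //; apply: inR_Xn.
  move=> [hn hnd]; apply: Classical_Prop.NNPP => hnI.
  have [hbn len] := below (b0 - n)%N n (leqnn _) hn hnI.
  move: hnd; rewrite (symE hsym).
  have -> : a - (n%:Z + (a - b)) = (b0 - n)%N%:Z by lia.
  by rewrite inHz_nat hbn.
move=> f; rewrite (gradedE _ hgr); split.
  move=> [hf hn]; split => // n nz; by case/XnE: (hn n nz).
move=> [hf hn]; split => // n nz; apply/XnE; split; [exact: hf | exact: hn].
Qed.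

End Char.

Section Shift.
Variables (K : fieldType) (H : pred nat) (a : int).
Hypotheses (hsg : numerical_semigroup H) (ha : a_inv_R H a) (hsym : symmetric_sg H a).

Lemma shiftL (I : {poly K} -> Prop) d : Mon H I d ->
  (forall f, I f -> exists g : {poly K}, 'X^(dneg d) * g = 'X^(dpos d) * f)
  /\ Mon H (shift_ideal I d) (- d).
Proof.
move=> hI.
have [hpos|hneg] := leP 0 d.
  have hdn : dneg d = 0%N by rewrite /dneg ltNge hpos.
  have hdp : dpos d = absz d by rewrite /dpos hpos.
  set e := absz d in hdp; have ed : d = e%:Z by rewrite /e; lia.
  rewrite hdn hdp expr0; split.
    by move=> f _; exists ('X^e * f); rewrite mul1r.
  move=> g; rewrite /shift_ideal hdn hdp expr0; split.
    move=> [f [/hI [hf1 hf2] ]]; rewrite mul1r => ->.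
    split => k; rewrite coefXnM; case: ltnP => [_|le nz]; rewrite ?eqxx //.
      by have := hf2 _ nz; rewrite ed -PoszD subnK.
      by have := hf1 _ nz; rewrite ed; have -> : k%:Z + - e%:Z = (k - e)%N%:Z by lia.
  move=> [hg1 hg2].
  have hge : forall i, (i < e)%N -> g`_i = 0.
    move=> i lt; apply/eqP/negPn/negP => nz; have := inHz_ge0 (hg2 _ nz); lia.
  exists (drop_poly e g); split; last by rewrite mul1r; apply: Xn_factor.
  apply/hI; split => i; rewrite coef_drop_poly => nz.
    have := hg2 _ nz; by have -> : (i + e)%N%:Z + - d = i%:Z by lia.
  by have := hg1 _ nz; rewrite -inHz_nat; have -> : i%:Z + d = (i + e)%N%:Z by lia.
have hdn : dneg d = absz d by rewrite /dneg hneg.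
have hdp : dpos d = 0%N by rewrite /dpos leNgt hneg.
set e := absz d in hdn; have ed : d = - e%:Z by rewrite /e; lia.
rewrite hdn hdp expr0; split.
  move=> f /hI [hf1 hf2]; exists (drop_poly e f); rewrite mul1r; symmetry; apply: Xn_factor.
  move=> i lt; apply/eqP/negPn/negP => nz; have := inHz_ge0 (hf2 _ nz); lia.
move=> g; rewrite /shift_ideal hdn hdp expr0; split.
  move=> [f [/hI [hf1 hf2] ]]; rewrite mul1r => ef.
  have hc : forall k, g`_k = f`_(k + e).
    by move=> k; rewrite -ef coefXnM ltnNge leq_addl /= addnK.
  split => k; rewrite hc => nz.
    by have := hf2 _ nz; rewrite ed -inHz_nat; have -> : (k + e)%N%:Z + - e%:Z = k%:Z by lia.
  by have := hf1 _ nz; rewrite -inHz_nat; have -> : (k + e)%N%:Z = k%:Z + - d by lia.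
move=> [hg1 hg2]; exists ('X^e * g); rewrite mul1r; split => //.
apply/hI; split => k; rewrite coefXnM; case: ltnP => [_|le nz]; rewrite ?eqxx //.
  by have := hg2 _ nz; rewrite ed opprK -PoszD subnK.
have := hg1 _ nz; rewrite -inHz_nat; by have -> : (k - e)%N%:Z = k%:Z + d by lia.
Qed.

End Shift.

Theorem corollary4p1 (K : fieldType) (H : pred nat) (a : int)
  (I : {poly K} -> Prop) (b : int) :
  numerical_semigroup H -> a_inv_R H a -> symmetric_sg H a ->
  in_XR H I -> a_quot H I b ->
  [/\ (* t^(a-b) I is contained in k[t] (hence, by in_XR below, in R) *)
      (forall f, I f -> exists g : {poly K}, 'X^(dneg (a - b)) * g = 'X^(dpos (a - b)) * f),
      (* (1) *)
      [/\ in_XR H (shift_ideal I (a - b)),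
          a_quot H (shift_ideal I (a - b)) (2 * a - b),
          (b < a -> a < 2 * a - b) & (a < b -> 2 * a - b < a)],
      (* (2) *)
      [/\ inHz H b, a != b & ~~ inHz H (a - b)],
      (* (3) *)
      (b < a -> 0 <= a - b /\ ~~ inHz H (a - b))
    & (* (4) *)
      (a < b -> 0 <= b - a /\ ~~ inHz H (b - a))].
Proof.
move=> hsg ha hsym [hgr hgor hmu] hab.
have hM : Mon H I (a - b) := charI hsg hsym hgr hgor hab.
have [hb hbH hnb hbound] := aquot_facts hsg hgr hab.
have hbz : inHz H b by rewrite /inHz hb.
have nd : ~~ inHz H (a - b).
  apply/negP => hd; have := inHzD hsg hbz hd; rewrite addrC subrK.
  by apply/negP; apply: a_notin ha.
have nab : a != b.
  by apply: contraNneq nd => ->; rewrite subrr; apply: H0.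
have nd4 : a < b -> ~~ inHz H (b - a).
  move=> lt; apply/negP => /inHzP [e [ee he]].
  have Se : I 'X^e.
    apply/(Mon_Xn _ hM); split => //; have -> : e%:Z + (a - b) = 0 by lia.
    exact: H0.
  have : (2 <= size [:: ('X^e : {poly K})])%N; last by [].
  apply: hmu => f; split.
    move=> /hM [hf1 hf2].
    have hfe : forall i, (i < e)%N -> f`_i = 0.
      move=> i lti; apply/eqP/negPn/negP => nz; have := inHz_ge0 (hf2 _ nz); lia.
    exists (fun _ => drop_poly e f); split.
      move=> _ i; rewrite coef_drop_poly => nz; have := hf2 _ nz.
      by have -> : (i + e)%N%:Z + (a - b) = i%:Z by lia.
    by rewrite big_ord1 /= mulrC -Xn_factor.
  move=> [rs [hrs ->]]; rewrite big_ord1 /=.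
  by case: hgr => _ _ _ hMul _; apply: hMul.
have nmd : ~~ inHz H (- (a - b)).
  have [lt|ge] := ltP b a.
    by apply/negP => /inHz_ge0; lia.
  have lt : a < b by rewrite lt_neqAle nab.
  by rewrite opprB; apply: nd4.
have [hsh1 hJ] := shiftL hM.
split.
- exact: hsh1.
- split.
  + split.
    * exact (@Mon_graded K H hsg _ _ hJ).
    * exact (@Mon_gor K H a hsg ha hsym _ _ hJ nmd).
    * by apply: (@Mon_mu K H a hsg ha _ _ hJ nmd); rewrite opprK.
  + have -> : 2 * a - b = a - - (a - b) by lia.
    exact (@Mon_aquot K H a hsg ha hsym _ _ hJ nmd).
  + lia.
  + lia.
- by split.
- move=> lt; split; [lia | exact: nd].
- move=> lt; split; [lia | exact: nd4].
Qed.
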